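(* Let $X$ be a quandle. The following are equivalent: (1) $X$ is a kei; (2) the identity map of $X$ is a good involution; (3) $X$ has a good involution which is a quandle homomorphism; (4) every good involution of $X$ is a quandle homomorphism, and $X$ has at least one good involution.
   Context: A quandle is a set $X$ with a binary operation $(x,y)\mapsto x^y$ such that $x^x=x$; for all $x,y$ there is a unique $z$ with $z^y=x$ (written $x^{y^{-1}}$); and $(x^y)^z=(x^z)^{(y^z)}$. A kei is a quandle with $(x^y)^y=x$ for all $x,y$ (equivalently $x^y=x^{y^{-1}}$). A good involution is a map $\rho:X\to X$ with $\rho\circ\rho={\rm id}$, $\rho(x^y)=\rho(x)^y$ and $x^{\rho(y)}=x^{y^{-1}}$ for all $x,y$. A quandle homomorphism is a map $f$ with $f(x^y)=f(x)^{f(y)}$. *)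

(* Defs.v *)
Set Implicit Arguments.

(* A quandle structure on X with operation op x y = x^y. *)
Definition is_quandle (X : Type) (op : X -> X -> X) : Prop :=
  (forall x, op x x = x) /\
  (forall x y, exists z, op z y = x /\ forall z', op z' y = x -> z' = z) /\
  (forall x y z, op (op x y) z = op (op x z) (op y z)).

(* x^{y^{-1}} = w means: w is the (unique) element with w^y = x. *)
Definition is_rinv (X : Type) (op : X -> X -> X) (x y w : X) : Prop :=
  op w y = x.

Definition is_kei (X : Type) (op : X -> X -> X) : Prop :=
  forall x y, op (op x y) y = x.

Definition good_involution (X : Type) (op : X -> X -> X) (rho : X -> X) : Prop :=
  (forall x, rho (rho x) = x) /\
  (forall x y, rho (op x y) = op (rho x) y) /\
  (forall x y, is_rinv op x y (op x (rho y))).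

Definition quandle_hom (X Y : Type) (opX : X -> X -> X) (opY : Y -> Y -> Y)
  (f : X -> Y) : Prop :=
  forall x y, f (opX x y) = opY (f x) (f y).

(* Main.v *)
Require Import Defs.

Lemma rcancel (X : Type) (op : X -> X -> X) (HX : is_quandle op) a b y :
  op a y = op b y -> a = b.
Proof.
  intros H. destruct HX as [_ [Hu _]].
  destruct (Hu (op a y) y) as [z [_ Hz]].
  rewrite (Hz a eq_refl). symmetry. apply Hz. now rewrite H.
Qed.

Lemma kei_of_good_hom (X : Type) (op : X -> X -> X) rho :
  good_involution op rho -> quandle_hom op op rho -> is_kei op.
Proof.
  intros [H1 [H2 H3]] Hh x y.
  assert (E : forall x, op x (rho y) = op x y).
  { intros z. pose proof (Hh (rho z) y) as e. rewrite H2, H1 in e.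
    (* e : op z y = op z (rho y) *)
    now rewrite e. }
  pose proof (H3 x y) as e. unfold is_rinv in e. now rewrite E in e.
Qed.

Theorem proposition3p4 (X : Type) (op : X -> X -> X) (HX : is_quandle op) :
  (is_kei op <-> good_involution op (fun x => x)) /\
  (good_involution op (fun x => x) <->
     exists rho, good_involution op rho /\ quandle_hom op op rho) /\
  ((exists rho, good_involution op rho /\ quandle_hom op op rho) <->
     ((forall rho, good_involution op rho -> quandle_hom op op rho) /\
      exists rho, good_involution op rho)).
Proof.
  assert (K1 : is_kei op <-> good_involution op (fun x => x)).
  { split.
    - intros Hk. split; [reflexivity| split; [reflexivity|]].
      intros x y. unfold is_rinv. apply Hk.
    - intros [_ [_ H3]] x y. apply H3. }
  split; [exact K1|]. split.
  - split.
    + intros Hg. exists (fun x => x). split; [exact Hg|]. intros x y; reflexivity.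
    + intros [rho [Hg Hh]]. apply K1. exact (@kei_of_good_hom X op rho Hg Hh).
  - split.
    + intros [rho [Hg Hh]]. pose proof (@kei_of_good_hom X op rho Hg Hh) as Hk.
      split; [| exists rho; exact Hg].
      intros s [S1 [S2 S3]] x y.
      assert (E : op (s x) (s y) = op (s x) y).
      { apply (@rcancel X op HX _ _ y). pose proof (S3 (s x) y) as e. unfold is_rinv in e.
        rewrite e. symmetry. apply Hk. }
      rewrite E. apply S2.
    + intros [Hall [rho Hg]]. exists rho. split; [exact Hg|]. now apply Hall.
Qed.
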